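(* Let $R$ be a ring and $G$ a group such that the group ring $RG$ is a DT ring and $2\in\Delta(R)$. Then $G$ is a $2$-group.
   Context: All rings are associative with identity; $U(R)$ is the group of units. $\Delta(R)=\{x\in R: x+u\in U(R)\text{ for all }u\in U(R)\}$. $\mathrm{Tr}(R)=\{x\in R: x^3=x\}$. A ring $R$ is a DT ring if every $r\in R$ can be written $r=e+d$ with $e\in\mathrm{Tr}(R)$ and $d\in\Delta(R)$. $RG$ denotes the group ring. *)

(* Defs.v *)
From HB Require Import structures.
From mathcomp Require Import all_boot all_order all_algebra.
From mathcomp Require Import finmap.
Set Implicit Arguments. Unset Strict Implicit. Unset Printing Implicit Defensive.
Import GRing.Theory.
Local Open Scope fset_scope.

Section RingNotions.
Variable R : nzRingType.
Local Open Scope ring_scope.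
Definition is_unit (u : R) : Prop := exists v : R, u * v = 1 /\ v * u = 1.
Definition in_Delta (x : R) : Prop := forall u : R, is_unit u -> is_unit (x + u).
End RingNotions.

(* The group ring RG of an arbitrary (possibly infinite) group G over R:
   finitely supported functions G -> R, with pointwise addition and
   convolution product. *)
Section GroupRing.
Variables (R : nzRingType) (G : groupType).
Local Open Scope ring_scope.

Definition grpring := {fsfun G -> R with 0}.

Definition gr_one : grpring :=
  [fsfun x in [fset 1%g] => (1 : R)].

Definition gr_add (a b : grpring) : grpring :=
  [fsfun x in finsupp a `|` finsupp b => a x + b x].

Definition gr_mul (a b : grpring) : grpring :=
  [fsfun x in [fset (h * k)%g | h in finsupp a, k in finsupp b] =>
     \sum_(h <- finsupp a) a h * b (h^-1 * x)%g].

Definition gr_unit (u : grpring) : Prop :=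
  exists v, gr_mul u v = gr_one /\ gr_mul v u = gr_one.
Definition gr_Delta (x : grpring) : Prop :=
  forall u, gr_unit u -> gr_unit (gr_add x u).
Definition gr_Tr (e : grpring) : Prop := gr_mul e (gr_mul e e) = e.
Definition grpring_DT : Prop :=
  forall r : grpring, exists e d, gr_Tr e /\ gr_Delta d /\ r = gr_add e d.
End GroupRing.

Definition two_group (G : groupType) : Prop :=
  forall g : G, exists n : nat, (g ^+ (2 ^ n))%g = 1%g.

(* Main.v *)
Require Import Defs.
From HB Require Import structures.
From mathcomp Require Import all_boot all_order all_algebra.
From mathcomp Require Import finmap.
Set Implicit Arguments. Unset Strict Implicit. Unset Printing Implicit Defensive.
Import GRing.Theory.

Section GR.
Variables (R : nzRingType) (G : groupType).
Local Open Scope fset_scope.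
Local Open Scope ring_scope.
Notation S := (grpring R G).

Lemma supp0 (a : S) x : x \notin finsupp a -> a x = 0.
Proof. by move=> /fsfun_dflt. Qed.

Lemma suppS (a : S) (A : {fset G}) x : finsupp a `<=` A -> x \notin A -> a x = 0.
Proof.
move=> /fsubsetP sub xA; apply: supp0; apply: contra xA; exact: sub.
Qed.

Lemma addE (a b : S) x : gr_add a b x = a x + b x.
Proof.
rewrite /gr_add fsfunE; case: ifP => //=.
rewrite in_fsetU => /norP[ha hb]; by rewrite !supp0 // addr0.
Qed.

Lemma sum_if1 (B : {fset G}) (F : G -> R) y : (y \notin B -> F y = 0) ->
  \sum_(k <- B) (if k == y then F k else 0) = F y.
Proof.
move=> Fy; case: (boolP (y \in B)) => yB.
  rewrite (big_fsetD1 y yB) /= eqxx big1_fset ?addr0 // => k.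
  by rewrite in_fsetD1 => /andP[/negbTE -> _].
rewrite Fy // big1_fset // => k kB _; case: eqP => // ky.
by move: yB; rewrite -ky kB.
Qed.

Lemma eq_mulgV (h k x : G) : ((h * k)%g == x) = (k == (h^-1 * x)%g).
Proof. by apply/eqP/eqP => [<-|->]; rewrite ?mulKg ?mulVKg. Qed.

Lemma mulE1 (a b : S) (A : {fset G}) x : finsupp a `<=` A ->
  gr_mul a b x = \sum_(h <- A) a h * b (h^-1 * x)%g.
Proof.
move=> sA; rewrite /gr_mul fsfunE.
rewrite -(big_fset_incl _ sA); last by move=> h _ /supp0 ->; rewrite mul0r.
case: ifP => // /negbT nx; rewrite big1_fset // => h ha _.
case: (boolP ((h^-1 * x)%g \in finsupp b)) => hb; last by rewrite (supp0 hb) mulr0.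
case/negP: nx; apply/imfset2P; exists h => //; exists (h^-1 * x)%g => //; by rewrite mulVKg.
Qed.

Lemma mulE (a b : S) (A B : {fset G}) x : finsupp a `<=` A -> finsupp b `<=` B ->
  gr_mul a b x = \sum_(h <- A) \sum_(k <- B) (if (h * k)%g == x then a h * b k else 0).
Proof.
move=> sA sB; rewrite (mulE1 b x sA); apply: eq_bigr => h _.
under eq_bigr do rewrite eq_mulgV.
by rewrite sum_if1 // => nB; rewrite (suppS sB nB) mulr0.
Qed.


Lemma supp_mul (a b : S) :
  finsupp (gr_mul a b) `<=` [fset (h * k)%g | h in finsupp a, k in finsupp b].
Proof. exact: finsupp_sub. Qed.

Lemma mulE3 (a b c : S) x : gr_mul a (gr_mul b c) x =
  \sum_(h <- finsupp a) \sum_(l <- finsupp b) \sum_(k <- finsupp c)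
     (if (h * (l * k))%g == x then a h * (b l * c k) else 0).
Proof.
rewrite (mulE x (fsubset_refl _) (supp_mul b c)).
apply: eq_bigr => h _.
under eq_bigr => n _ do rewrite (mulE n (fsubset_refl (finsupp b)) (fsubset_refl (finsupp c))).
transitivity (\sum_(n <- [fset (h * k)%g | h in finsupp b, k in finsupp c])
  \sum_(l <- finsupp b) \sum_(k <- finsupp c)
   (if (l * k)%g == n then (if (h * n)%g == x then a h * (b l * c k) else 0) else 0)).
  apply: eq_bigr => n _; case: ifP => _; last first.
    by rewrite big1 // => l _; rewrite big1 // => k _; case: ifP.
  rewrite big_distrr; apply: eq_bigr => l _; rewrite big_distrr; apply: eq_bigr => k _.
  by case: ifP => _; [ | apply: mulr0].


rewrite exchange_big; apply: eq_fbigr => l lB _.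
rewrite exchange_big; apply: eq_fbigr => k kC _.
under eq_bigr do rewrite eq_sym.
rewrite sum_if1 // => /negP[]; apply/imfset2P; exists l => //; by exists k.
Qed.

Lemma mulE3' (a b c : S) x : gr_mul (gr_mul a b) c x =
  \sum_(h <- finsupp a) \sum_(l <- finsupp b) \sum_(k <- finsupp c)
     (if ((h * l) * k)%g == x then (a h * b l) * c k else 0).
Proof.
rewrite (mulE x (supp_mul a b) (fsubset_refl _)).
rewrite exchange_big /=.
transitivity (\sum_(k <- finsupp c) \sum_(h <- finsupp a) \sum_(l <- finsupp b)
     (if ((h * l) * k)%g == x then (a h * b l) * c k else 0)); last first.
  rewrite exchange_big; apply: eq_bigr => h _; by rewrite exchange_big.
apply: eq_bigr => k _.
under eq_bigr => n _ do rewrite (mulE n (fsubset_refl (finsupp a)) (fsubset_refl (finsupp b))).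
transitivity (\sum_(n <- [fset (h * k)%g | h in finsupp a, k in finsupp b])
  \sum_(h <- finsupp a) \sum_(l <- finsupp b)
   (if (h * l)%g == n then (if (n * k)%g == x then (a h * b l) * c k else 0) else 0)).
  apply: eq_bigr => n _; case: ifP => _; last first.
    by rewrite big1 // => h _; rewrite big1 // => l _; case: ifP.
  rewrite mulr_suml; apply: eq_bigr => h _; rewrite mulr_suml; apply: eq_bigr => l _.
  by case: ifP; rewrite ?mul0r.
rewrite exchange_big; apply: eq_fbigr => h hA _.
rewrite exchange_big; apply: eq_fbigr => l lB _.
under eq_bigr do rewrite eq_sym.
rewrite sum_if1 // => /negP[]; apply/imfset2P; exists h => //; by exists l.
Qed.

Lemma mulA (a b c : S) : gr_mul a (gr_mul b c) = gr_mul (gr_mul a b) c.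
Proof.
apply/fsfunP => x; rewrite mulE3 mulE3'.
apply: eq_bigr => h _; apply: eq_bigr => l _; apply: eq_bigr => k _.
by rewrite mulgA mulrA.
Qed.

Definition gr_zero : S := [fsfun].
Lemma zeroE x : gr_zero x = 0.
Proof. by rewrite /gr_zero fsfunE. Qed.

Definition gr_opp (a : S) : S := [fsfun x in finsupp a => - a x].
Lemma oppE a x : gr_opp a x = - a x.
Proof. rewrite /gr_opp fsfunE; case: ifP => // /negbT/supp0 ->; by rewrite oppr0. Qed.

Definition delta (g : G) : S := [fsfun x in [fset g] => (1 : R)].
Lemma deltaE g x : delta g x = if x == g then 1 else 0.
Proof. by rewrite /delta fsfunE in_fset1. Qed.

Lemma oneE x : gr_one R G x = if x == 1%g then 1 else 0.
Proof. exact: deltaE. Qed.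

Lemma addA : associative (@gr_add R G).
Proof. by move=> a b c; apply/fsfunP => x; rewrite !addE addrA. Qed.
Lemma addC : commutative (@gr_add R G).
Proof. by move=> a b; apply/fsfunP => x; rewrite !addE addrC. Qed.
Lemma add0 : left_id gr_zero (@gr_add R G).
Proof. by move=> a; apply/fsfunP => x; rewrite !addE zeroE add0r. Qed.
Lemma addN : left_inverse gr_zero gr_opp (@gr_add R G).
Proof. by move=> a; apply/fsfunP => x; rewrite !addE zeroE oppE addNr. Qed.

Lemma mulDr : right_distributive (@gr_mul R G) (@gr_add R G).
Proof.
move=> a b c; apply/fsfunP => x; rewrite addE !(mulE1 _ x (fsubset_refl (finsupp a))) -big_split.
by apply: eq_bigr => h _; rewrite addE mulrDr.
Qed.

Lemma mulDl : left_distributive (@gr_mul R G) (@gr_add R G).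
Proof.
move=> a b c; apply/fsfunP => x; rewrite addE.
have sU : finsupp (gr_add a b) `<=` finsupp a `|` finsupp b by exact: finsupp_sub.
rewrite (mulE1 _ x sU) (mulE1 c x (fsubsetUl (finsupp a) (finsupp b))) (mulE1 c x (fsubsetUr (finsupp a) (finsupp b))) -big_split.
by apply: eq_bigr => h _; rewrite addE mulrDl.
Qed.

Lemma mul1 : left_id (gr_one R G) (@gr_mul R G).
Proof.
move=> a; apply/fsfunP => x.
have s1 : finsupp (gr_one R G) `<=` [fset 1%g] by exact: finsupp_sub.
by rewrite (mulE1 _ x s1) big_seq_fset1 oneE eqxx mul1r invg1 mul1g.
Qed.

Lemma mulr1' : right_id (gr_one R G) (@gr_mul R G).
Proof.
move=> a; apply/fsfunP => x; rewrite (mulE1 _ x (fsubset_refl (finsupp a))).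
under eq_bigr => h _ do rewrite oneE.
have E : forall h, ((h^-1 * x)%g == 1%g) = (h == x).
  by move=> h; rewrite eq_sym -eq_mulgV mulg1.
under eq_bigr => h _ do rewrite E.
rewrite -[RHS](sum_if1 (B := finsupp a) (F := a)); last by move/supp0.
by apply: eq_bigr => h _; case: ifP; rewrite ?mulr1 ?mulr0.
Qed.

Lemma one_neq0 : gr_one R G != gr_zero.
Proof.
apply/negP => /eqP /fsfunP /(_ 1%g); rewrite oneE zeroE eqxx => /eqP.
by rewrite oner_eq0.
Qed.

End GR.

HB.instance Definition _ (R : nzRingType) (G : groupType) := Choice.on (grpring R G).
HB.instance Definition _ (R : nzRingType) (G : groupType) :=
  GRing.isZmodule.Build (grpring R G) (@addA R G) (@addC R G) (@add0 R G) (@addN R G).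
HB.instance Definition _ (R : nzRingType) (G : groupType) :=
  GRing.Zmodule_isNzRing.Build (grpring R G) (@mulA R G) (@mul1 R G) (@mulr1' R G)
    (@mulDl R G) (@mulDr R G) (@one_neq0 R G).

Lemma add4 (V : zmodType) (A B C D : V) : (-(B + C) + ((A + C) + (B + D)) = A + D)%R.
Proof. by rewrite addrC [(B + D)%R]addrC addrACA [(C + B)%R]addrC addrK. Qed.

Section Abs.
Variable S : nzRingType.
Local Open Scope ring_scope.
Implicit Types (x y u v e d a : S).

Lemma unit1 : is_unit (1 : S).
Proof. by exists 1; rewrite mulr1. Qed.

Lemma unitM u v : is_unit u -> is_unit v -> is_unit (u * v).
Proof.
move=> [u' [h1 h2]] [v' [h3 h4]]; exists (v' * u'); split.
  by rewrite mulrA -(mulrA u) h3 mulr1 h1.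
by rewrite mulrA -(mulrA v') h2 mulr1 h4.
Qed.

Lemma unitN u : is_unit u -> is_unit (- u).
Proof. by move=> [u' [h1 h2]]; exists (- u'); rewrite !mulrNN. Qed.

Lemma unitX u n : is_unit u -> is_unit (u ^+ n).
Proof. move=> hu; elim: n => [|n IH]; first by rewrite expr0; apply: unit1.
by rewrite exprS; apply: unitM. Qed.

Lemma D0 : in_Delta (0 : S).
Proof. by move=> u hu; rewrite add0r. Qed.

Lemma DN x : in_Delta x -> in_Delta (- x).
Proof.
move=> hx u hu; have := unitN (hx _ (unitN hu)).
by rewrite opprD opprK.
Qed.

Lemma DD x y : in_Delta x -> in_Delta y -> in_Delta (x + y).
Proof. by move=> hx hy u hu; rewrite -addrA; apply: hx; apply: hy. Qed.

Lemma DUl v x : is_unit v -> in_Delta x -> in_Delta (v * x).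
Proof.
move=> [v' [h1 h2]] hx u hu.
have -> : v * x + u = v * (x + v' * u) by rewrite mulrDr mulrA h1 mul1r.
apply: unitM; first by exists v'.
by apply: hx; apply: unitM => //; exists v.
Qed.

Lemma DUr v x : is_unit v -> in_Delta x -> in_Delta (x * v).
Proof.
move=> [v' [h1 h2]] hx u hu.
have -> : x * v + u = (x + u * v') * v by rewrite mulrDl -mulrA h2 mulr1.
apply: unitM; last by exists v'.
by apply: hx; apply: unitM => //; exists v.
Qed.

Lemma D1 x : in_Delta x -> is_unit (1 + x).
Proof. by move=> hx; rewrite addrC; apply: hx; apply: unit1. Qed.

Lemma DM x y : in_Delta x -> in_Delta y -> in_Delta (x * y).
Proof.
move=> hx hy u hu; have [u' [h1 h2]] := hu.
have hu' : is_unit u' by exists u.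
have hz : in_Delta (y * u') by apply: DUr.
have -> : x * y + u = (1 + x * (y * u')) * u.
  by rewrite mulrDl mul1r -!mulrA h2 mulr1 addrC.
apply: unitM => //.
have -> : 1 + x * (y * u') = - (x + y * u') + (1 + x) * (1 + y * u').
  by rewrite mulrDl mul1r mulrDr mulr1 add4.
apply: DN; first by apply: DD.
by apply: unitM; apply: D1.
Qed.

Definition Pd c := forall x, in_Delta x -> in_Delta (c * x) /\ in_Delta (x * c).

Lemma Pd_unit v : is_unit v -> Pd v.
Proof. by move=> hv x hx; split; [apply: DUl | apply: DUr]. Qed.

Lemma Pd_Delta d : in_Delta d -> Pd d.
Proof. by move=> hd x hx; split; apply: DM. Qed.

Lemma Pd_add a b : Pd a -> Pd b -> Pd (a + b).
Proof.
move=> ha hb x hx; have [h1 h2] := ha x hx; have [h3 h4] := hb x hx.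
by rewrite mulrDl mulrDr; split; apply: DD.
Qed.

Lemma Pd_opp a : Pd a -> Pd (- a).
Proof.
move=> ha x hx; have [h1 h2] := ha x hx.
by rewrite mulNr mulrN; split; apply: DN.
Qed.

Lemma Pd_mul a b : Pd a -> Pd b -> Pd (a * b).
Proof.
move=> ha hb x hx; split.
  by rewrite -mulrA; apply: (ha _ (hb x hx).1).1.
by rewrite mulrA; apply: (hb _ (ha x hx).2).2.
Qed.

Lemma telescope3 (A B C D : S) : (A - B) + (B - C) + (C - D) = A - D.
Proof. by rewrite !addrA !subrK. Qed.

Lemma TL e d : in_Delta d -> e * (e * e) = e -> Pd (e + d) ->
  in_Delta ((e + d) * ((e + d) * (e + d)) - (e + d)).
Proof.
move=> dD ee Pa.
have Pe : Pd e.
  have -> : e = (e + d) - d by rewrite addrK.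
  exact: Pd_add Pa (Pd_opp (Pd_Delta dD)).
have gen : forall a, d = a - e ->
    a * (a * a) - e * (e * e) = d * (a * a) + e * (d * a) + e * (e * d).
  move=> a ->; rewrite !(mulrBl, mulrBr).
  by rewrite telescope3.
have E := gen (e + d) (esym (etrans (f_equal (fun t => t - e) (addrC e d)) (addrK e d))).
rewrite -[(e + d) * _](subrK (e * (e * e))) E ee addrKA.
have Paa := Pd_mul Pa Pa.
apply: DD; last exact: DN.
apply: DD; first apply: DD.
- exact: (Paa d dD).2.
- exact: (Pe _ (Pa d dD).2).1.
- exact: (Pe _ (Pe d dD).1).1.
Qed.

Lemma cube1 x : in_Delta (1 + 1 : S) -> is_unit x ->
  in_Delta ((1 + x) * ((1 + x) * (1 + x)) - (1 + x)) -> in_Delta (1 + x).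
Proof.
move=> h2 hx hD.
have E : (1 + x) * ((1 + x) * (1 + x)) - (1 + x) = (1 + x) * (x * ((1 + 1) + x)).
  rewrite -{4}[1 + x]mulr1 -mulrBr; congr (_ * _).
  rewrite mulrDl mul1r mulrDr !mulrDr !mulr1 addrAC.
  by rewrite [1 + x]addrC addrK addrA.
have hw : is_unit (x * ((1 + 1) + x)) by apply: unitM => //; apply: h2.
have [w' [h1 h3]] := hw.
have -> : 1 + x = ((1 + x) * (x * ((1 + 1) + x))) * w' by rewrite -mulrA h1 mulr1.
apply: DUr; first by exists (x * ((1 + 1) + x)).
by rewrite -E.
Qed.

Lemma odd_trivial x k : is_unit x -> in_Delta (1 + x) -> x ^+ (2 * k + 1) = 1 -> x = 1.
Proof.
move=> hx hD hxm.
have N1 : forall k, in_Delta (\sum_(i < 2 * k + 1) x ^+ i - 1).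
  elim=> [|j IH]; first by rewrite big_ord1 expr0 subrr; apply: D0.
  have -> : (2 * j.+1 + 1 = (2 * j + 1).+2)%N by rewrite mulnS !addSn.
  rewrite !big_ord_recr /=.
  have -> : \sum_(i < 2 * j + 1) x ^+ i + x ^+ (2 * j + 1) + x ^+ (2 * j + 1).+1 - 1
     = (\sum_(i < 2 * j + 1) x ^+ i - 1) + x ^+ (2 * j + 1) * (1 + x).
    by rewrite mulrDr mulr1 -exprSr -[_ + _ + x ^+ _.+1]addrA addrAC.
  by apply: DD => //; apply: DUl => //; apply: unitX.
have hN := D1 (N1 k); rewrite addrC subrK in hN.
have [N' [h1 h2]] := hN.
have := subrX1 x (2 * k + 1); rewrite hxm subrr => /esym /(f_equal (fun t => t * N')).
by rewrite mul0r -mulrA h1 mulr1 => /eqP; rewrite subr_eq0 => /eqP.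
Qed.

End Abs.

Section GRC.
Variables (R : nzRingType) (G : groupType).
Local Open Scope fset_scope.
Local Open Scope ring_scope.
Notation S := (grpring R G).

Lemma delta1 : delta R (1%g : G) = 1.
Proof. by []. Qed.

Lemma subE (a b : S) x : (a - b) x = a x - b x.
Proof. by rewrite [LHS]addE oppE. Qed.

Lemma deltaMl (g : G) (b : S) x : (delta R g * b) x = b (g^-1 * x)%g.
Proof.
have s1 : finsupp (delta R g) `<=` [fset g] by exact: finsupp_sub.
by rewrite [LHS](mulE1 _ x s1) big_seq_fset1 deltaE eqxx mul1r.
Qed.

Lemma deltaMr (b : S) (g : G) x : (b * delta R g) x = b (x * g^-1)%g.
Proof.
rewrite [LHS](mulE1 _ x (fsubset_refl (finsupp b))).
under eq_bigr => h _ do rewrite deltaE.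
have E : forall h, ((h^-1 * x)%g == g) = (h == (x * g^-1)%g).
  move=> h; apply/eqP/eqP => [<-|->]; first by rewrite invgM invgK mulVKg.
  by rewrite invgM invgK mulgVK.
under eq_bigr => h _ do rewrite E.
rewrite -[RHS](sum_if1 (B := finsupp b) (F := b)); last by move/supp0.
by apply: eq_bigr => h _; case: ifP; rewrite ?mulr1 ?mulr0.
Qed.

Lemma deltaM (g h : G) : delta R g * delta R h = delta R (g * h)%g.
Proof.
apply/fsfunP => x; rewrite deltaMl !deltaE; congr (if _ then _ else _).
by rewrite eq_sym -eq_mulgV eq_sym.
Qed.

Lemma deltaX (g : G) n : delta R g ^+ n = delta R (g ^+ n)%g.
Proof.
elim: n => [|n IH]; first by rewrite expr0 expg0.
by rewrite exprS IH deltaM expgS.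
Qed.

Lemma delta_unit (g : G) : is_unit (delta R g).
Proof. by exists (delta R g^-1); rewrite !deltaM mulgV mulVg. Qed.

Lemma delta_eq1 (g : G) : delta R g = 1 -> g = 1%g.
Proof.
move/fsfunP/(_ g); rewrite deltaE oneE eqxx.
case: eqP => // _ /eqP; by rewrite oner_eq0.
Qed.

Lemma natE n x : (n%:R : S) x = if x == 1%g then n%:R else 0.
Proof.
elim: n => [|n IH]; first by rewrite [LHS]zeroE; case: ifP.
by rewrite mulrS [LHS]addE IH oneE; case: ifP; rewrite ?addr0 // mulrS.
Qed.

Definition cst (r : R) : S := [fsfun x in [fset 1%g] => r].
Lemma cstE r x : cst r x = if x == 1%g then r else 0.
Proof. by rewrite /cst fsfunE in_fset1. Qed.

Lemma cstMl r (b : S) x : (cst r * b) x = r * b x.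
Proof.
have s1 : finsupp (cst r) `<=` [fset 1%g] by exact: finsupp_sub.
by rewrite [LHS](mulE1 _ x s1) big_seq_fset1 cstE eqxx invg1 mul1g.
Qed.

Lemma cstMr (b : S) r x : (b * cst r) x = b x * r.
Proof.
rewrite [LHS](mulE1 _ x (fsubset_refl (finsupp b))).
under eq_bigr => h _ do rewrite cstE.
have E : forall h, ((h^-1 * x)%g == 1%g) = (h == x).
  by move=> h; rewrite eq_sym -eq_mulgV mulg1.
under eq_bigr => h _ do rewrite E.
rewrite -[RHS](sum_if1 (B := finsupp b) (F := fun h => b h * r)); last first.
  by move/supp0 ->; rewrite mul0r.
by apply: eq_bigr => h _; case: ifP; rewrite ?mulr0.
Qed.

Lemma nat_unit n : is_unit (n%:R : R) -> is_unit (n%:R : S).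
Proof.
move=> [v [h1 h2]]; exists (cst v); split; apply/fsfunP => x.
  by rewrite cstMr natE oneE; case: ifP; rewrite ?mul0r.
by rewrite cstMl natE oneE; case: ifP; rewrite ?mulr0.
Qed.

Lemma pow_inj (z : G) : (forall n, (0 < n)%N -> (z ^+ n)%g != 1%g) ->
  injective (fun n => (z ^+ n)%g).
Proof.
move=> hz i j /= eij.
wlog ij : i j eij / (i <= j)%N.
  by move=> W; case: (leqP i j) => [|/ltnW] h; [apply: W | apply/esym/W].
move: eij; rewrite -(subnKC ij) expgnDr -{1}[(z ^+ i)%g]mulg1 => /mulgI/esym/eqP e1.
case: (posnP (j - i)) => [->|pos]; first by rewrite addn0.
by move: (hz _ pos); rewrite e1.
Qed.

Lemma fin_const (f : S) (z : G) (v : R) : (forall n, (0 < n)%N -> (z ^+ n)%g != 1%g) ->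
  (forall n, f (z ^+ n.+1)%g = v) -> v = 0.
Proof.
move=> hz hf; apply/eqP; apply/negPn/negP => v0.
pose s := [seq (z ^+ n.+1)%g | n <- iota 0 (#|` finsupp f|).+1].
have us : uniq s.
  rewrite map_inj_uniq ?iota_uniq // => i j /(pow_inj hz); by case.
have ss : {subset s <= finsupp f}.
  move=> y /mapP [n _ ->]; by rewrite mem_finsupp hf.
have := uniq_leq_size us ss; by rewrite size_map size_iota cardfE ltnn.
Qed.

End GRC.

From mathcomp Require Import zify.
From Stdlib Require Import Classical.

Lemma sub3 (V : zmodType) (A B C D : V) : (A + B + C - (B + C + D) = A - D)%R.
Proof. by rewrite -[(A + B + C)%R]addrA addrKA. Qed.

Theorem theorem3p10 (R : nzRingType) (G : groupType) :
  grpring_DT R G -> in_Delta (2%:R : R) -> two_group G.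
Proof.
move=> DT h2R.
have DT' : forall r : grpring R G, exists e d, (e * (e * e) = e /\ in_Delta d /\ r = e + d)%R := DT.
have tri : forall a : grpring R G, Pd a -> in_Delta (a * (a * a) - a)%R.
  move=> a Pa; have [e [d [ee [dD ea]]]] := DT' a; rewrite ea in Pa *; exact: TL.
have h3 : is_unit (3%:R : grpring R G)%R.
  apply: nat_unit; have -> : (3%:R : R)%R = (2%:R + 1)%R by rewrite mulrSr.
  exact: (h2R 1%R (unit1 R)).
have h2S : in_Delta (1 + 1 : grpring R G)%R.
  have P2 : Pd (1 + 1 : grpring R G)%R := Pd_add (Pd_unit (unit1 _)) (Pd_unit (unit1 _)).
  have := tri _ P2.
  have E : ((1 + 1) * ((1 + 1) * (1 + 1)) - (1 + 1) = (3%:R : grpring R G) * (1 + 1))%R.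
    by rewrite -mulr2n -!natrM -natrB.
  rewrite E => h6; have [v [hv1 hv2]] := h3.
  have -> : (1 + 1 : grpring R G)%R = (v * (3%:R * (1 + 1)))%R by rewrite mulrA hv2 mul1r.
  by apply: DUl => //; exists 3%:R%R.
have hD1 : forall g : G, in_Delta (1 + delta R g)%R.
  move=> g; apply: cube1 => //; first exact: delta_unit.
  apply: tri; apply: Pd_add; apply: Pd_unit; [exact: unit1 | exact: delta_unit].
move=> g.
case: (classic (exists m, (0 < m)%N /\ (g ^+ m)%g = 1%g)) => [[m [m0 gm]] | inf].
  have [o oc mE] := @pfactor_coprime 2 m (erefl _) m0.
  rewrite coprime2n in oc.
  exists (logn 2 m); apply: delta_eq1.
  have oE : o = (2 * o./2 + 1)%N.
    by rewrite -{1}(odd_double_half o) oc addnC -muln2 mulnC.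
  have hx : (delta R (g ^+ (2 ^ logn 2 m))%g ^+ (2 * o./2 + 1) = 1)%R.
    by rewrite -oE deltaX -expgnA mulnC -mE gm.
  exact: odd_trivial (@delta_unit R G _) (hD1 _) hx.
exfalso.
have hz : forall n, (0 < n)%N -> (g ^+ n)%g != 1%g.
  by move=> n n0; apply/eqP => e; apply: inf; exists n.
pose x := delta R g.
have ua : is_unit (1 + x + x ^+ 2)%R.
  have := hD1 (g ^+ 2)%g x (@delta_unit R G g).
  by rewrite -deltaX addrAC.
have [f [af fa]] := ua.
have E1 : ((1 + x + x ^+ 2) * (1 - x) = 1 - x ^+ 3)%R.
  by rewrite mulrBr mulr1 !mulrDl mul1r -expr2 -exprSr sub3.
have E2 : (f * (1 - x ^+ 3) = 1 - x)%R by rewrite -E1 mulrA fa mul1r.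
pose c := (g ^+ 3)%g.
rewrite /x deltaX -/c in E2.
have rec : forall y, (f y - f (y * c^-1)%g =
    (if y == 1%g then 1 else 0) - (if y == g then 1 else 0))%R.
  move=> y; have := f_equal (fun t : grpring R G => t y) E2.
  by rewrite /= mulrBr mulr1 subE deltaMr subE oneE deltaE.
have gne : forall m, (g ^+ m.+2)%g != g.
  move=> m; apply/eqP; rewrite expgSr -{3}[g]mul1g => /mulIg /eqP.
  by rewrite (negbTE (hz _ _)).
have hc : forall n, (0 < n)%N -> (c ^+ n)%g != 1%g.
  by move=> n n0; rewrite -expgnA hz // muln_gt0.
have cne : forall n, (c ^+ n.+1)%g != g.
  move=> n; rewrite -expgnA (_ : (3 * n.+1 = (3 * n + 1).+2)%N); [exact: gne | lia].
have step : forall n, f (c ^+ n.+1)%g = f (c ^+ n)%g.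
  move=> n; have := rec (c ^+ n.+1)%g.
  rewrite (negbTE (hc _ _)) // (negbTE (cne _)) subrr expgSr mulgK.
  by move/eqP; rewrite subr_eq0 => /eqP.
have pos : forall n, f (c ^+ n.+1)%g = f 1%g.
  elim=> [|n IH]; first by rewrite step expg0.
  by rewrite step IH.
pose c' := (c^-1)%g.
have hc' : forall n, (0 < n)%N -> (c' ^+ n)%g != 1%g.
  by move=> n n0; rewrite expVgn invg_eq1; exact: hc.
have cne' : forall n, (c' ^+ n.+1)%g != g.
  move=> n; rewrite expVgn eqg_invLR; apply/eqP => e.
  move/eqP: (hz (3 * n.+1).+1 isT); apply.
  by rewrite expgSr expgnA -/c e mulVg.
have step' : forall n, f (c' ^+ n.+1)%g = f (c' ^+ n.+2)%g.
  move=> n; have := rec (c' ^+ n.+1)%g.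
  rewrite (negbTE (hc' _ _)) // (negbTE (cne' _)) subrr -/c' -expgSr.
  by move/eqP; rewrite subr_eq0 => /eqP.
have neg : forall n, f (c' ^+ n.+1)%g = f c'.
  elim=> [|n IH]; first by rewrite expg1.
  by rewrite -step' IH.
have g1 : (g == 1%g) = false.
  by apply/negbTE; have := hz 1 isT; rewrite expg1.
have := rec 1%g; rewrite eqxx eq_sym g1 mul1g -/c'.
rewrite (fin_const hc pos) (fin_const hc' neg) subrr subr0 => /eqP.
by rewrite eq_sym oner_eq0.
Qed.
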